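(* Let $n=3$, $I_1=\{1,2\}$, $I_2=\{2,3\}$, $f=x_1x_2+x_2^2x_3$, $g_1=x_2^3$, $g_2=-x_2^3$, $g_3=x_3$, and $S(g)=\{x\in\mathbb R^3: g_1(x)\ge0,g_2(x)\ge0,g_3(x)\ge0\}$ (so $f=0$ on $S(g)$). Let $\theta_1=1+x_1^2+x_2^2$, $\theta_2=1+x_2^2+x_3^2$, $\Theta_1=\theta_1(1+x_2^2)$, $\Theta_2=\theta_2(1+x_2^2)$. Then: (1) $f$ cannot be written as $\sigma_1+\psi_1g_1+\sigma_2+\sigma_3g_3$ with $\sigma_1\in\Sigma[x(I_1)]$, $\psi_1\in\mathbb R[x(I_1)]$, $\sigma_2,\sigma_3\in\Sigma[x(I_2)]$; (2) for every $\varepsilon>0$ there exist $k\in\mathbb N$, $\sigma_1\in\Sigma[x(I_1)]_{2k+2}$, $\psi_1\in\mathbb R[x(I_1)]_{4k+1}$, $\sigma_2\in\Sigma[x(I_2)]_{2k+2}$, $\sigma_3\in\Sigma[x(I_2)]_{4k+3}$ such that $$f+\varepsilon(\theta_1^2+\theta_2^2)=\frac{\sigma_1+\psi_1g_1}{\Theta_1^k}+\frac{\sigma_2+\sigma_3g_3}{\Theta_2^k}.$$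
   Context: For $T\subseteq\{1,\dots,n\}$, $x(T)=(x_i)_{i\in T}$; $\mathbb R[x(T)]$ is the ring of polynomials in $x(T)$ and $\mathbb R[x(T)]_t$ its elements of degree at most $t$; $\Sigma[x(T)]$ is the set of sums of squares of polynomials in $x(T)$ and $\Sigma[x(T)]_t$ the sums of squares of elements of $\mathbb R[x(T)]_t$. *)

(* Defs.v *)
(* Polynomials in x1,x2,x3 are
   represented by their polynomial functions R^3 -> R (over the infinite field R,
   polynomial identities and functional identities coincide). *)
From Stdlib Require Import Reals List.
Open Scope R_scope.

Definition pfun := R -> R -> R -> R.

Definition is_poly (T : nat -> Prop) (t : nat) (p : pfun) : Prop :=
  exists c : nat -> nat -> nat -> R,
    (forall a b e, c a b e <> 0 ->
        (a + b + e <= t)%nat /\ (a <> 0%nat -> T 1%nat) /\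
        (b <> 0%nat -> T 2%nat) /\ (e <> 0%nat -> T 3%nat)) /\
    (forall x1 x2 x3 : R, p x1 x2 x3 =
        sum_f_R0 (fun a => sum_f_R0 (fun b => sum_f_R0 (fun e =>
           c a b e * x1 ^ a * x2 ^ b * x3 ^ e) t) t) t).

Definition is_poly_any (T : nat -> Prop) (p : pfun) : Prop :=
  exists t, is_poly T t p.

Definition is_sos (T : nat -> Prop) (t : nat) (p : pfun) : Prop :=
  exists qs : list pfun, Forall (is_poly T t) qs /\
    forall x1 x2 x3 : R, p x1 x2 x3 =
      fold_right (fun q acc => (q x1 x2 x3) ^ 2 + acc) 0 qs.

Definition is_sos_any (T : nat -> Prop) (p : pfun) : Prop :=
  exists t, is_sos T t p.

Definition I1 (i : nat) : Prop := i = 1%nat \/ i = 2%nat.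
Definition I2 (i : nat) : Prop := i = 2%nat \/ i = 3%nat.

Definition f0 (x1 x2 x3 : R) : R := x1 * x2 + x2 ^ 2 * x3.
Definition g1 (x1 x2 x3 : R) : R := x2 ^ 3.
Definition g2 (x1 x2 x3 : R) : R := - x2 ^ 3.
Definition g3 (x1 x2 x3 : R) : R := x3.

Definition theta1 (x1 x2 x3 : R) : R := 1 + x1 ^ 2 + x2 ^ 2.
Definition theta2 (x1 x2 x3 : R) : R := 1 + x2 ^ 2 + x3 ^ 2.
Definition Theta1 (x1 x2 x3 : R) : R := theta1 x1 x2 x3 * (1 + x2 ^ 2).
Definition Theta2 (x1 x2 x3 : R) : R := theta2 x1 x2 x3 * (1 + x2 ^ 2).

(* Main.v *)
Require Import Defs.
From Stdlib Require Import Reals List Lra Lia Psatz.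
Open Scope R_scope.

Definition TS (t : nat) (F : nat -> nat -> nat -> R) : R :=
  sum_f_R0 (fun a => sum_f_R0 (fun b => sum_f_R0 (fun e => F a b e) t) t) t.

Lemma sum_zero (F : nat -> R) t : (forall i, (i <= t)%nat -> F i = 0) -> sum_f_R0 F t = 0.
Proof.
  induction t; intros H; simpl.
  - apply H; lia.
  - rewrite IHt by (intros; apply H; lia). rewrite H by lia. ring.
Qed.

Lemma sum_single (F : nat -> R) j t : (j <= t)%nat -> (forall i, i <> j -> F i = 0) -> sum_f_R0 F t = F j.
Proof.
  induction t; intros Hj H; simpl.
  - assert (j = 0%nat) by lia. subst; auto.
  - destruct (Nat.eq_dec j (S t)) as [->|Hn].
    + rewrite sum_zero. ring. intros; apply H; lia.
    + rewrite IHt by (auto; lia). rewrite (H (S t)) by lia. ring.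
Qed.

Lemma TS_plus t F G : TS t (fun a b e => F a b e + G a b e) = TS t F + TS t G.
Proof.
  unfold TS. rewrite <- sum_plus. apply sum_eq; intros.
  rewrite <- sum_plus. apply sum_eq; intros. apply sum_plus.
Qed.

Lemma TS_zero t F : (forall a b e, F a b e = 0) -> TS t F = 0.
Proof.
  intros H; unfold TS. apply sum_zero; intros. apply sum_zero; intros. apply sum_zero; intros. auto.
Qed.

Lemma TS_single t F a0 b0 e0 : (a0 <= t)%nat -> (b0 <= t)%nat -> (e0 <= t)%nat ->
  (forall a b e, (a <> a0 \/ b <> b0 \/ e <> e0) -> F a b e = 0) ->
  TS t F = F a0 b0 e0.
Proof.
  intros Ha Hb He H; unfold TS.
  rewrite (sum_single _ a0) by (auto; intros; apply sum_zero; intros; apply sum_zero; intros; apply H; auto).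
  rewrite (sum_single _ b0) by (auto; intros; apply sum_zero; intros; apply H; auto).
  apply sum_single; auto.
Qed.

Definition mono := (R * nat * nat * nat)%type.
Definition meval (m : mono) (x1 x2 x3 : R) : R :=
  match m with (c,a,b,e) => c * x1^a * x2^b * x3^e end.
Fixpoint mleval (l : list mono) (x1 x2 x3 : R) : R :=
  match l with nil => 0 | m :: l' => meval m x1 x2 x3 + mleval l' x1 x2 x3 end.
Definition mok (T : nat -> Prop) (t : nat) (m : mono) : Prop :=
  match m with (c,a,b,e) => (a+b+e <= t)%nat /\ (a <> 0%nat -> T 1%nat) /\
    (b <> 0%nat -> T 2%nat) /\ (e <> 0%nat -> T 3%nat) end.

Fixpoint coef (l : list mono) (a b e : nat) : R :=
  match l with nil => 0
  | (c,a',b',e') :: l' =>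
     (if andb (Nat.eqb a a') (andb (Nat.eqb b b') (Nat.eqb e e')) then c else 0) + coef l' a b e end.

Lemma ml_poly T t l : Forall (mok T t) l -> is_poly T t (mleval l).
Proof.
  intros HF. exists (coef l). split.
  - intros a b e Hne. induction HF as [|m l Hm HF IH]; simpl in Hne.
    + contradiction.
    + destruct m as [[[c a'] b'] e']. simpl in Hm.
      destruct (andb (Nat.eqb a a') (andb (Nat.eqb b b') (Nat.eqb e e'))) eqn:E.
      * apply andb_prop in E as [E1 E2]. apply andb_prop in E2 as [E2 E3].
        apply Nat.eqb_eq in E1, E2, E3. subst. destruct Hm as (H1&H2&H3&H4).
        repeat split; auto.
      * apply IH. intro Hc. apply Hne. rewrite Hc. ring.
  - intros x1 x2 x3. fold (TS t (fun a b e => coef l a b e * x1 ^ a * x2 ^ b * x3 ^ e)).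
    induction HF as [|m l Hm HF IH]; simpl.
    + symmetry; apply TS_zero; intros; ring.
    + destruct m as [[[c a'] b'] e']. simpl in Hm. destruct Hm as (H1&H2&H3&H4).
      rewrite IH. symmetry.
      transitivity (TS t (fun a b e => (if andb (Nat.eqb a a') (andb (Nat.eqb b b') (Nat.eqb e e')) then c else 0) * x1 ^ a * x2 ^ b * x3 ^ e + coef l a b e * x1 ^ a * x2 ^ b * x3 ^ e)).
      1:{ unfold TS; apply sum_eq; intros; apply sum_eq; intros; apply sum_eq; intros; ring. }
      rewrite TS_plus. f_equal.
      rewrite (TS_single _ _ a' b' e') by (first [lia | intros a b e Hd;
        destruct (andb (Nat.eqb a a') (andb (Nat.eqb b b') (Nat.eqb e e'))) eqn:E; [|ring];
        apply andb_prop in E as [E1 E2]; apply andb_prop in E2 as [E2 E3];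
        apply Nat.eqb_eq in E1, E2, E3; lia]).
      rewrite !Nat.eqb_refl. simpl. reflexivity.
Qed.

Lemma mleval_app l1 l2 x1 x2 x3 : mleval (l1 ++ l2) x1 x2 x3 = mleval l1 x1 x2 x3 + mleval l2 x1 x2 x3.
Proof. induction l1; simpl; [ring| rewrite IHl1; ring]. Qed.

Definition mmul (m m' : mono) : mono :=
  match m, m' with (c,a,b,e), (c',a',b',e') => (c*c', (a+a')%nat, (b+b')%nat, (e+e')%nat) end.
Definition mlmul (l1 l2 : list mono) : list mono := flat_map (fun m => map (mmul m) l2) l1.

Lemma mleval_map_mmul m l x1 x2 x3 : mleval (map (mmul m) l) x1 x2 x3 = meval m x1 x2 x3 * mleval l x1 x2 x3.
Proof.
  induction l as [|m' l IH]; simpl; [ring|]. rewrite IH.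
  destruct m as [[[c a] b] e]; destruct m' as [[[c' a'] b'] e']; simpl.
  rewrite !pow_add. ring.
Qed.

Lemma mleval_mul l1 l2 x1 x2 x3 : mleval (mlmul l1 l2) x1 x2 x3 = mleval l1 x1 x2 x3 * mleval l2 x1 x2 x3.
Proof.
  induction l1; simpl; [ring|]. unfold mlmul in *. simpl. rewrite mleval_app, mleval_map_mmul, IHl1. ring.
Qed.

Lemma mok_mono T t t' m : (t <= t')%nat -> mok T t m -> mok T t' m.
Proof. destruct m as [[[c a] b] e]; simpl; intros; intuition lia. Qed.

Lemma mok_mul T t t' m m' : mok T t m -> mok T t' m' -> mok T (t + t') (mmul m m').
Proof.
  destruct m as [[[c a] b] e]; destruct m' as [[[c' a'] b'] e']; simpl.
  intros (H1&H2&H3&H4) (G1&G2&G3&G4). repeat split; try lia.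
  - intro; destruct a; [apply G2; lia| apply H2; lia].
  - intro; destruct b; [apply G3; lia| apply H3; lia].
  - intro; destruct e; [apply G4; lia| apply H4; lia].
Qed.

Lemma Forall_mlmul T t t' l1 l2 : Forall (mok T t) l1 -> Forall (mok T t') l2 -> Forall (mok T (t+t')) (mlmul l1 l2).
Proof.
  intros H1 H2. unfold mlmul. apply Forall_forall. intros m Hm.
  apply in_flat_map in Hm as [m1 [Hm1 Hm]]. apply in_map_iff in Hm as [m2 [<- Hm2]].
  apply mok_mul; [eapply Forall_forall in H1 | eapply Forall_forall in H2]; eauto.
Qed.

Lemma Forall_mono T t t' l : (t <= t')%nat -> Forall (mok T t) l -> Forall (mok T t') l.
Proof. intros Ht H. eapply Forall_impl; [|exact H]. intros; eapply mok_mono; eauto. Qed.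

Fixpoint sumsq (L : list (list mono)) x1 x2 x3 : R :=
  match L with nil => 0 | q :: L' => (mleval q x1 x2 x3)^2 + sumsq L' x1 x2 x3 end.

Definition sosmul (L1 L2 : list (list mono)) := flat_map (fun q => map (mlmul q) L2) L1.

Lemma sumsq_app L1 L2 x1 x2 x3 : sumsq (L1 ++ L2) x1 x2 x3 = sumsq L1 x1 x2 x3 + sumsq L2 x1 x2 x3.
Proof. induction L1; simpl; [ring| rewrite IHL1; ring]. Qed.

Lemma sumsq_mul L1 L2 x1 x2 x3 : sumsq (sosmul L1 L2) x1 x2 x3 = sumsq L1 x1 x2 x3 * sumsq L2 x1 x2 x3.
Proof.
  induction L1 as [|q L1 IH]; simpl; [ring|]. unfold sosmul in *. simpl. rewrite sumsq_app, IH.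
  assert (forall L, sumsq (map (mlmul q) L) x1 x2 x3 = (mleval q x1 x2 x3)^2 * sumsq L x1 x2 x3) as ->.
  { induction L; simpl; [ring|]. rewrite IHL, mleval_mul. ring. }
  ring.
Qed.

Lemma Forall_sosmul T t t' L1 L2 : Forall (Forall (mok T t)) L1 -> Forall (Forall (mok T t')) L2 ->
  Forall (Forall (mok T (t+t'))) (sosmul L1 L2).
Proof.
  intros H1 H2. unfold sosmul. apply Forall_forall. intros m Hm.
  apply in_flat_map in Hm as [m1 [Hm1 Hm]]. apply in_map_iff in Hm as [m2 [<- Hm2]].
  apply Forall_mlmul; [eapply Forall_forall in H1 | eapply Forall_forall in H2]; eauto.
Qed.

Lemma Forall_sos_mono T t t' L : (t <= t')%nat -> Forall (Forall (mok T t)) L -> Forall (Forall (mok T t')) L.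
Proof. intros Ht H. eapply Forall_impl; [|exact H]. intros; eapply Forall_mono; eauto. Qed.

Lemma sos_of T t L p : Forall (Forall (mok T t)) L -> (forall x1 x2 x3, p x1 x2 x3 = sumsq L x1 x2 x3) -> is_sos T t p.
Proof.
  intros HL Hp. exists (map mleval L). split.
  - apply Forall_map. eapply Forall_impl; [|exact HL]. intros; apply ml_poly; auto.
  - intros. rewrite Hp. clear. induction L; simpl; auto. rewrite IHL; auto.
Qed.

Definition one : list mono := (1, 0%nat, 0%nat, 0%nat) :: nil.
Fixpoint powL (L : list (list mono)) (k : nat) : list (list mono) :=
  match k with O => one :: nil | S k' => sosmul L (powL L k') end.

Lemma sumsq_pow L k x1 x2 x3 : sumsq (powL L k) x1 x2 x3 = (sumsq L x1 x2 x3)^k.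
Proof. induction k; simpl powL; [simpl; ring|]. rewrite sumsq_mul, IHk. simpl. ring. Qed.

Lemma Forall_pow T d L k : Forall (Forall (mok T d)) L -> Forall (Forall (mok T (k*d))) (powL L k).
Proof.
  intros H; induction k; simpl powL.
  - repeat constructor; simpl; lia.
  - replace (S k * d)%nat with (d + k*d)%nat by lia. apply Forall_sosmul; auto.
Qed.

Definition scal (r : R) (l : list mono) : list mono := map (fun m => match m with (c,a,b,e) => (r*c,a,b,e) end) l.
Lemma mleval_scal r l x1 x2 x3 : mleval (scal r l) x1 x2 x3 = r * mleval l x1 x2 x3.
Proof. induction l as [|[[[c a] b] e] l IH]; simpl; [ring|]. rewrite IH. ring. Qed.
Lemma Forall_scal T t r l : Forall (mok T t) l -> Forall (mok T t) (scal r l).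
Proof. induction 1 as [|[[[c a] b] e]]; simpl; constructor; auto. Qed.

Import ListNotations.

Lemma TS_abs t F G : (forall a b e, Rabs (F a b e) <= G a b e) -> Rabs (TS t F) <= TS t G.
Proof.
  intros H. unfold TS. eapply Rle_trans; [apply sum_f_R0_triangle|]. apply sum_Rle; intros.
  eapply Rle_trans; [apply sum_f_R0_triangle|]. apply sum_Rle; intros.
  eapply Rle_trans; [apply sum_f_R0_triangle|]. apply sum_Rle; intros. auto.
Qed.

Lemma pow_abs_le1 x n : Rabs x <= 1 -> Rabs (x ^ n) <= 1.
Proof. intros H. rewrite <- RPow_abs. rewrite <- (pow1 n). apply pow_incr. split; auto. apply Rabs_pos. Qed.

Lemma poly_bound T t p : is_poly T t p -> exists M, 0 <= M /\
  forall x1 x2 x3, Rabs x1 <= 1 -> Rabs x2 <= 1 -> Rabs x3 <= 1 -> Rabs (p x1 x2 x3) <= M.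
Proof.
  intros [c [_ Hp]].
  assert (B: forall x1 x2 x3, Rabs x1 <= 1 -> Rabs x2 <= 1 -> Rabs x3 <= 1 ->
     Rabs (p x1 x2 x3) <= TS t (fun a b e => Rabs (c a b e))).
  { intros x1 x2 x3 H1 H2 H3. rewrite Hp. fold (TS t (fun a b e => c a b e * x1 ^ a * x2 ^ b * x3 ^ e)).
    apply TS_abs. intros a b e. rewrite !Rabs_mult.
    pose proof (pow_abs_le1 x1 a H1). pose proof (pow_abs_le1 x2 b H2). pose proof (pow_abs_le1 x3 e H3).
    pose proof (Rabs_pos (c a b e)). pose proof (Rabs_pos (x1^a)). pose proof (Rabs_pos (x2^b)). pose proof (Rabs_pos (x3^e)).
    assert (Rabs (c a b e) * Rabs (x1 ^ a) <= Rabs (c a b e)) by nra.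
    assert (Rabs (c a b e) * Rabs (x1 ^ a) * Rabs (x2 ^ b) <= Rabs (c a b e)) by nra.
    nra. }
  eexists; split; [|exact B].
  eapply Rle_trans; [apply Rabs_pos| apply (B 0 0 0)]; rewrite Rabs_R0; lra.
Qed.

Lemma sos_nonneg qs x1 x2 x3 : 0 <= fold_right (fun (q : pfun) acc => (q x1 x2 x3) ^ 2 + acc) 0 qs.
Proof. induction qs as [|q qs IH]. - simpl; lra. - cbn [fold_right]. pose proof (pow2_ge_0 (q x1 x2 x3)). lra. Qed.

Lemma part1 : ~ exists s1 p1 s2 s3 : pfun,
       is_sos_any I1 s1 /\ is_poly_any I1 p1 /\
       is_sos_any I2 s2 /\ is_sos_any I2 s3 /\
       forall x1 x2 x3 : R,
         f0 x1 x2 x3 = s1 x1 x2 x3 + p1 x1 x2 x3 * g1 x1 x2 x3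
                      + s2 x1 x2 x3 + s3 x1 x2 x3 * g3 x1 x2 x3.
Proof.
  intros (s1&p1&s2&s3&[t1 [q1 [_ H1]]]&[tp Hp]&[t2 [q2 [_ H2]]]&_&H).
  destruct (poly_bound _ _ _ Hp) as [M [HM HB]].
  set (t := - / (M + 1)).
  assert (Ht : t * (M+1) = -1) by (unfold t; field; lra).
  assert (Htn : -1 <= t < 0).
  { assert (t < 0). { unfold t. apply Ropp_lt_gt_0_contravar. apply Rinv_0_lt_compat. lra. }
    split; nra. }
  specialize (H 1 t 0). specialize (HB 1 t 0).
  assert (0 <= s1 1 t 0) by (rewrite H1; apply sos_nonneg). assert (0 <= s2 1 t 0) by (rewrite H2; apply sos_nonneg).
  unfold f0, g1, g3 in H.
  assert (Rabs (p1 1 t 0) <= M) as Hb by (apply HB; rewrite ?Rabs_R1, ?Rabs_R0; try lra;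
     apply Rabs_le; lra).
  assert (-M <= p1 1 t 0 <= M) by (split; [pose proof (Rle_abs (- p1 1 t 0)); rewrite Rabs_Ropp in *|pose proof (Rle_abs (p1 1 t 0))]; lra).
  set (P := p1 1 t 0) in *.
  (* t >= P t^3, i.e. 1 <= P t^2 (t<0); but P t^2 <= M t^2 < 1 *)
  clearbody P t. assert (t >= P * t ^ 3) by nra.
  assert (1 <= P * t^2) by nra.
  assert (P * t^2 <= M * t^2) by nra.
  assert (M * t^2 * (M+1)^2 = M) by (replace (M * t ^ 2 * (M + 1) ^ 2) with (M * (t*(M+1))^2) by ring; rewrite Ht; ring).
  nra.
Qed.

Definition mon (c : R) (a b e : nat) : mono := (c, a, b, e).
Definition vl : list mono := [mon 1 0 0 0; mon 1 0 2 0].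
Fixpoint vml (k : nat) : list mono := match k with O => one | S k' => mlmul vl (vml k') end.
Fixpoint Qml (k : nat) : list mono := match k with O => nil | S k' => Qml k' ++ vml k' end.
Fixpoint Pml (k : nat) : list mono := match k with O => nil | S k' => Pml k' ++ Qml k' end.
Definition th1ml : list mono := [mon 1 0 0 0; mon 1 2 0 0; mon 1 0 2 0].
Fixpoint th1pow (k : nat) : list mono := match k with O => one | S k' => mlmul th1ml (th1pow k') end.

Lemma vml_eval k x1 x2 x3 : mleval (vml k) x1 x2 x3 = (1 + x2^2)^k.
Proof. induction k; cbn [vml]; [simpl; ring|]. rewrite mleval_mul, IHk. simpl. ring. Qed.

Lemma th1pow_eval k x1 x2 x3 : mleval (th1pow k) x1 x2 x3 = theta1 x1 x2 x3 ^ k.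
Proof. induction k; cbn [th1pow]; [simpl; ring|]. rewrite mleval_mul, IHk. unfold theta1; simpl. ring. Qed.

Lemma vq k x1 x2 x3 : (1 + x2^2)^k = 1 + x2^2 * mleval (Qml k) x1 x2 x3.
Proof.
  induction k; [simpl; ring|]. cbn [Qml]. rewrite mleval_app, vml_eval.
  rewrite <- tech_pow_Rmult, IHk. ring.
Qed.

Lemma qp k x1 x2 x3 : mleval (Qml k) x1 x2 x3 = INR k + x2^2 * mleval (Pml k) x1 x2 x3.
Proof.
  induction k; [simpl; ring|]. cbn [Qml Pml]. rewrite !mleval_app, vml_eval, (vq k x1 x2 x3), !IHk, S_INR.
  ring.
Qed.


Lemma vml_deg (T : nat -> Prop) (T2 : T 2%nat) k : Forall (mok T (2*k)) (vml k).
Proof.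
  induction k; cbn [vml].
  - repeat constructor; simpl; lia.
  - replace (2 * S k)%nat with (2 + 2*k)%nat by lia. apply Forall_mlmul; auto.
    repeat constructor; simpl; auto; lia.
Qed.

Lemma Qml_deg (T : nat -> Prop) (T2 : T 2%nat) k : Forall (mok T (2*k-2)) (Qml k).
Proof.
  induction k; cbn [Qml]; [constructor|]. apply Forall_app; split.
  - eapply Forall_mono; [|exact IHk]. lia.
  - eapply Forall_mono; [|apply (vml_deg T T2)]. lia.
Qed.

Lemma Pml_deg (T : nat -> Prop) (T2 : T 2%nat) k : Forall (mok T (2*k-4)) (Pml k).
Proof.
  induction k; cbn [Pml]; [constructor|]. apply Forall_app; split.
  - eapply Forall_mono; [|exact IHk]. lia.
  - eapply Forall_mono; [|apply (Qml_deg T T2)]. lia.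
Qed.

Lemma I1_2 : I1 2%nat. Proof. right; auto. Qed.
Lemma I1_1 : I1 1%nat. Proof. left; auto. Qed.
Lemma I2_2 : I2 2%nat. Proof. left; auto. Qed.
Lemma I2_3 : I2 3%nat. Proof. right; auto. Qed.

Lemma th1ml_deg : Forall (mok I1 2) th1ml.
Proof. pose proof I1_1; pose proof I1_2. repeat constructor; simpl; auto; lia. Qed.

Lemma th1pow_deg k : Forall (mok I1 (2*k)) (th1pow k).
Proof.
  induction k; cbn [th1pow].
  - repeat constructor; simpl; lia.
  - replace (2 * S k)%nat with (2 + 2*k)%nat by lia. apply Forall_mlmul; auto. apply th1ml_deg.
Qed.

Definition psiml (eps : R) (k : nat) : list mono :=
  mlmul (th1pow k) (mlmul [mon 1 1 0 0] (Qml k) ++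
     scal eps (mlmul (mlmul th1ml th1ml) (mlmul [mon 1 0 1 0] (Pml k)))).

Lemma psi_eval eps k x1 x2 x3 : mleval (psiml eps k) x1 x2 x3 =
  theta1 x1 x2 x3 ^ k * (x1 * mleval (Qml k) x1 x2 x3 + eps * theta1 x1 x2 x3 ^ 2 * x2 * mleval (Pml k) x1 x2 x3).
Proof.
  unfold psiml. rewrite mleval_mul, th1pow_eval, mleval_app, mleval_scal, !mleval_mul.
  unfold theta1; simpl. ring.
Qed.

Lemma psi_deg eps k : (2 <= k)%nat -> Forall (mok I1 (4*k+1)) (psiml eps k).
Proof.
  intros Hk. unfold psiml. replace (4*k+1)%nat with (2*k + (2*k+1))%nat by lia.
  apply Forall_mlmul; [apply th1pow_deg|]. apply Forall_app; split.
  - assert (Forall (mok I1 1) [mon 1 1 0 0]) by (repeat constructor; simpl; try lia; intros; apply I1_1).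
    eapply Forall_mono; [|apply Forall_mlmul; [exact H|apply (Qml_deg _ I1_2)]]. lia.
  - assert (Forall (mok I1 1) [mon 1 0 1 0]) by (repeat constructor; simpl; try lia; intros; apply I1_2).
    apply Forall_scal. eapply Forall_mono; [|apply Forall_mlmul; [apply Forall_mlmul; apply th1ml_deg|apply Forall_mlmul; [exact H|apply (Pml_deg _ I1_2)]]].
    lia.
Qed.

Definition th1L : list (list mono) := [one; [mon 1 1 0 0]; [mon 1 0 1 0]].
Definition th2L : list (list mono) := [one; [mon 1 0 1 0]; [mon 1 0 0 1]].
Definition vL : list (list mono) := [one; [mon 1 0 1 0]].

Lemma th1L_eval x1 x2 x3 : sumsq th1L x1 x2 x3 = theta1 x1 x2 x3.
Proof. unfold theta1; simpl. ring. Qed.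
Lemma th2L_eval x1 x2 x3 : sumsq th2L x1 x2 x3 = theta2 x1 x2 x3.
Proof. unfold theta2; simpl. ring. Qed.
Lemma vL_eval x1 x2 x3 : sumsq vL x1 x2 x3 = 1 + x2^2.
Proof. simpl. ring. Qed.

Lemma th1L_deg : Forall (Forall (mok I1 1)) th1L.
Proof. pose proof I1_1; pose proof I1_2. repeat constructor; simpl; auto; lia. Qed.
Lemma th2L_deg : Forall (Forall (mok I2 1)) th2L.
Proof. pose proof I2_3; pose proof I2_2. repeat constructor; simpl; auto; lia. Qed.
Lemma vL_deg : Forall (Forall (mok I2 1)) vL.
Proof. pose proof I2_3; pose proof I2_2. repeat constructor; simpl; auto; lia. Qed.

Definition c0 (eps K : R) := 2*eps + eps*K - /(16*eps).

Definition Troots (eps K : R) : list (list mono) :=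
  [ scal (sqrt eps) [mon 1 0 0 0; mon (-1) 2 0 0];
    scal (sqrt eps) [mon 2 1 0 0; mon (/(4*eps)) 0 1 0];
    scal (sqrt (c0 eps K)) [mon 1 0 1 0];
    scal (sqrt (2*eps)) [mon 1 1 1 0];
    scal (sqrt eps) [mon 1 0 2 0];
    scal (sqrt (2*eps*K)) [mon 1 1 1 0];
    scal (sqrt (2*eps*K)) [mon 1 0 2 0];
    scal (sqrt (eps*K)) [mon 1 2 1 0; mon 1 0 3 0] ].

Lemma Troots_eval eps K x1 x2 x3 : 0 < eps -> 0 <= K -> 0 <= c0 eps K ->
  sumsq (Troots eps K) x1 x2 x3 =
  eps * theta1 x1 x2 x3 ^ 2 + x1 * x2 + eps * K * x2^2 * theta1 x1 x2 x3 ^ 2.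
Proof.
  intros He HK Hc. unfold Troots. cbn [sumsq]. rewrite !mleval_scal, !Rpow_mult_distr.
  rewrite !pow2_sqrt.
  all: try (unfold c0, theta1; simpl; field; lra).
  all: first [assumption | lra | nra].
Qed.

Lemma Troots_deg eps K : Forall (Forall (mok I1 3)) (Troots eps K).
Proof.
  pose proof I1_1; pose proof I1_2.
  unfold Troots. repeat apply Forall_cons; try apply Forall_nil; try apply Forall_scal;
    repeat apply Forall_cons; try apply Forall_nil; simpl; repeat split; auto; lia.
Qed.

Lemma sumsq_scal r L x1 x2 x3 : sumsq (map (scal r) L) x1 x2 x3 = r^2 * sumsq L x1 x2 x3.
Proof. induction L; simpl map; cbn [sumsq]; [ring|]. rewrite IHL, mleval_scal. ring. Qed.

Lemma Forall_sos_scal T t r L : Forall (Forall (mok T t)) L -> Forall (Forall (mok T t)) (map (scal r) L).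
Proof. intros H. apply Forall_map. eapply Forall_impl; [|exact H]. intros; apply Forall_scal; auto. Qed.

Lemma alg (x1 x2 x3 eps K Q P : R) k : (1+x2^2)^k = 1+x2^2*Q -> Q = K + x2^2*P ->
  x1*x2 + x2^2*x3 + eps*((1+x1^2+x2^2)^2+(1+x2^2+x3^2)^2) =
  ((1+x1^2+x2^2)^k*(eps*(1+x1^2+x2^2)^2 + x1*x2 + eps*K*x2^2*(1+x1^2+x2^2)^2)
    + (1+x1^2+x2^2)^k*(x1*Q + eps*(1+x1^2+x2^2)^2*x2*P)*x2^3)/(((1+x1^2+x2^2)*(1+x2^2))^k)
  + (eps*((1+x2^2+x3^2)^(k+2)*(1+x2^2)^k) + x2^2*((1+x2^2+x3^2)^k*(1+x2^2)^k)*x3)/(((1+x2^2+x3^2)*(1+x2^2))^k).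
Proof.
  intros HV HQ. rewrite !Rpow_mult_distr, pow_add.
  set (t1 := 1+x1^2+x2^2). set (t2 := 1+x2^2+x3^2). set (V := (1+x2^2)^k) in *.
  assert (0 < t1) by (unfold t1; nra). assert (0 < t2) by (unfold t2; nra).
  assert (0 < V) by (unfold V; apply pow_lt; nra).
  assert (0 < t1^k) by (apply pow_lt; auto). assert (0 < t2^k) by (apply pow_lt; auto).
  assert (E1: t1 ^ k * (eps * t1 ^ 2 + x1 * x2 + eps * K * x2 ^ 2 * t1 ^ 2) +
     t1 ^ k * (x1 * Q + eps * t1 ^ 2 * x2 * P) * x2 ^ 3 = (x1*x2 + eps*t1^2) * (t1^k * V)).
  { rewrite HV, HQ. ring. }
  rewrite E1. field. split; lra.
Qed.

Lemma part2 : forall eps : R, 0 < eps ->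
     exists (k : nat) (s1 p1 s2 s3 : pfun),
       is_sos I1 (2 * k + 2) s1 /\ is_poly I1 (4 * k + 1) p1 /\
       is_sos I2 (2 * k + 2) s2 /\ is_sos I2 (4 * k + 3) s3 /\
       forall x1 x2 x3 : R,
         f0 x1 x2 x3 + eps * (theta1 x1 x2 x3 ^ 2 + theta2 x1 x2 x3 ^ 2) =
           (s1 x1 x2 x3 + p1 x1 x2 x3 * g1 x1 x2 x3) / (Theta1 x1 x2 x3 ^ k)
         + (s2 x1 x2 x3 + s3 x1 x2 x3 * g3 x1 x2 x3) / (Theta2 x1 x2 x3 ^ k).
Proof.
  intros eps He.
  destruct (archimed_cor1 (16*eps^2)) as [N [HN HN0]]; [nra|].
  pose proof (lt_0_INR N HN0) as HNp.
  set (k := (N+2)%nat). set (K := INR k).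
  assert (HK : K = INR N + 2) by (unfold K, k; rewrite plus_INR; simpl; ring).
  assert (H1 : 1 < 16*eps^2 * INR N).
  { apply (Rmult_lt_compat_l (INR N)) in HN; auto. rewrite Rinv_r in HN by lra. lra. }
  assert (H2 : / (16*eps) < eps * INR N).
  { apply (Rmult_lt_reg_l (16*eps)); [lra|]. rewrite Rinv_r by lra. nra. }
  assert (Hc : 0 <= c0 eps K) by (unfold c0; rewrite HK; nra).
  assert (HK0 : 0 <= K) by lra.
  exists k, (sumsq (sosmul (powL th1L k) (Troots eps K))), (mleval (psiml eps k)),
    (sumsq (map (scal (sqrt eps)) (sosmul (powL th2L (k+2)) (powL vL k)))),
    (sumsq (sosmul [[mon 1 0 1 0]] (sosmul (powL th2L k) (powL vL k)))).
  split; [|split; [|split; [|split]]].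
  - apply (sos_of _ _ (sosmul (powL th1L k) (Troots eps K))); [|auto].
    eapply Forall_sos_mono; [|apply Forall_sosmul; [apply Forall_pow, th1L_deg|apply Troots_deg]].
    unfold k; lia.
  - apply ml_poly, psi_deg. unfold k; lia.
  - apply (sos_of _ _ (map (scal (sqrt eps)) (sosmul (powL th2L (k+2)) (powL vL k)))); [|auto].
    apply Forall_sos_scal.
    eapply Forall_sos_mono; [|apply Forall_sosmul; apply Forall_pow; [apply th2L_deg|apply vL_deg]].
    lia.
  - apply (sos_of _ _ (sosmul [[mon 1 0 1 0]] (sosmul (powL th2L k) (powL vL k)))); [|auto].
    assert (Forall (Forall (mok I2 1)) [[mon 1 0 1 0]]) by (repeat constructor; simpl; try lia; intros; apply I2_2).
    eapply Forall_sos_mono; [|apply Forall_sosmul; [exact H|apply Forall_sosmul; apply Forall_pow; [apply th2L_deg|apply vL_deg]]].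
    lia.
  - intros x1 x2 x3.
    rewrite !sumsq_mul, !sumsq_pow, th1L_eval, Troots_eval by auto.
    rewrite psi_eval, sumsq_scal, pow2_sqrt by lra.
    rewrite !sumsq_mul, !sumsq_pow, th2L_eval, vL_eval.
    pose proof (vq k x1 x2 x3) as HV. pose proof (qp k x1 x2 x3) as HQ. fold K in HQ.
    unfold f0, g1, g3, Theta1, Theta2, theta1, theta2. cbn [sumsq mleval meval mon].
    replace ((1 * x1^0 * x2^1 * x3^0 + 0)^2 + 0) with (x2^2) by ring.
    apply alg; auto.
Qed.

Theorem mainTheorem11 :
  (~ exists s1 p1 s2 s3 : pfun,
       is_sos_any I1 s1 /\ is_poly_any I1 p1 /\
       is_sos_any I2 s2 /\ is_sos_any I2 s3 /\
       forall x1 x2 x3 : R,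
         f0 x1 x2 x3 = s1 x1 x2 x3 + p1 x1 x2 x3 * g1 x1 x2 x3
                      + s2 x1 x2 x3 + s3 x1 x2 x3 * g3 x1 x2 x3)
  /\
  (forall eps : R, 0 < eps ->
     exists (k : nat) (s1 p1 s2 s3 : pfun),
       is_sos I1 (2 * k + 2) s1 /\ is_poly I1 (4 * k + 1) p1 /\
       is_sos I2 (2 * k + 2) s2 /\ is_sos I2 (4 * k + 3) s3 /\
       forall x1 x2 x3 : R,
         f0 x1 x2 x3 + eps * (theta1 x1 x2 x3 ^ 2 + theta2 x1 x2 x3 ^ 2) =
           (s1 x1 x2 x3 + p1 x1 x2 x3 * g1 x1 x2 x3) / (Theta1 x1 x2 x3 ^ k)
         + (s2 x1 x2 x3 + s3 x1 x2 x3 * g3 x1 x2 x3) / (Theta2 x1 x2 x3 ^ k)).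
Proof.
  split; [exact part1 | exact part2].
Qed.
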